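(* Let $M,N,K$ be symmetric homogeneous bi-variate means having symmetric asymptotic expansions with coefficients $(a^M_n)$, $(a^N_n)$, $(a^K_n)$. Suppose $K$ and $N$ are stable and $M$ is $(K,N)$-stabilized, i.e. $M(s,t)=K\big(N(s,M(s,t)),N(M(s,t),t)\big)$ for all $s,t>0$. Then $a^M_0=1$ and for $m\ge1$ $$a^M_m=\sum_{n=1}^ma^N_n\sum_{k=0}^{2m-2n}P[k,2n,\mathbf g^M]P[2m-2n-k,-2n+1,\mathbf h^M]+2\sum_{n=1}^ma^K_n\sum_{k=0}^{m-n}P[k,2n,\mathbf d]P[m-n-k,-2n+1,\mathbf s],$$ with $\mathbf d,\mathbf s$ defined by $d_m=-\frac12\sum_{n=0}^ma^N_n\sum_{k=0}^{2m+1-2n}P[k,2n,\mathbf g^M]P[2m+1-2n-k,-2n+1,\mathbf h^M]$ and $s_m=\frac12\sum_{n=0}^ma^N_n\sum_{k=0}^{2m-2n}P[k,2n,\mathbf g^M]P[2m-2n-k,-2n+1,\mathbf h^M]$. In particular $a^M_1=\frac12(a^K_1+a^N_1)$.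
   Context: A bi-variate mean is $M:(0,\infty)^2\to(0,\infty)$ with $\min(s,t)\le M(s,t)\le\max(s,t)$; symmetric and homogeneous (degree 1) as usual. $M$ is stable if $M(s,t)=M\big(M(s,M(s,t)),M(M(s,t),t)\big)$. For two nontrivial stable means $K,N$, a mean $M$ is $(K,N)$-stabilized if $M(s,t)=K\big(N(s,M(s,t)),N(M(s,t),t)\big)$ for all $s,t>0$. A mean has a symmetric asymptotic expansion with coefficients $(a_n)$ if for every fixed real $t$ and $N\ge0$, $M(x-t,x+t)=\sum_{n=0}^Na_nt^{2n}x^{-2n+1}+o(x^{-2N+1})$ as $x\to\infty$. For a sequence $\mathbf b$ with $b_0\ne0$, $r\in\mathbb R$: $P[0,r,\mathbf b]=b_0^r$, $P[n,r,\mathbf b]=\frac1{nb_0}\sum_{k=1}^n(k(1+r)-n)b_kP[n-k,r,\mathbf b]$ ($n\ge1$), i.e. the coefficient of $z^n$ in $(\sum_jb_jz^j)^r$. $\mathbf g^M=(1,a^M_1,0,a^M_2,0,\ldots)$ ($g_0=1$, $g_{2k-1}=a^M_k$, $g_{2k}=0$), $\mathbf h^M=(2,-1,a^M_1,0,a^M_2,0,\ldots)$ ($h_0=2$, $h_1=-1$, $h_{2k}=a^M_k$, $h_{2k+1}=0$), $k\ge1$. *)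

(* Defs.v *)
From Stdlib Require Import Reals Lra Lia.
From Coquelicot Require Import Coquelicot.
Open Scope R_scope.

Fixpoint sumR (n : nat) (f : nat -> R) : R :=
  match n with
  | O => 0
  | S n' => sumR n' f + f n'
  end.

(* sum_{i=lo}^{hi} f i  (empty if hi < lo) *)
Definition sum_ft (lo hi : nat) (f : nat -> R) : R :=
  sumR (S hi - lo) (fun i => f (lo + i)%nat).

(* A bi-variate mean on (0,oo)^2 (functions are total on R x R; only
   positive arguments matter). *)
Definition is_mean (M : R -> R -> R) : Prop :=
  forall s t, 0 < s -> 0 < t -> Rmin s t <= M s t <= Rmax s t.

Definition is_symmetric (M : R -> R -> R) : Prop :=
  forall s t, 0 < s -> 0 < t -> M s t = M t s.

Definition is_homogeneous (M : R -> R -> R) : Prop :=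
  forall l s t, 0 < l -> 0 < s -> 0 < t -> M (l * s) (l * t) = l * M s t.

Definition is_stable (M : R -> R -> R) : Prop :=
  forall s t, 0 < s -> 0 < t ->
    M s t = M (M s (M s t)) (M (M s t) t).

Definition is_stabilized (K N M : R -> R -> R) : Prop :=
  forall s t, 0 < s -> 0 < t ->
    M s t = K (N s (M s t)) (N (M s t) t).

(* Symmetric asymptotic expansion with coefficients a:
   for all real t and all Nn, as x -> +oo,
   M(x-t,x+t) = sum_{n=0}^{Nn} a_n t^{2n} x^{-2n+1} + o(x^{-2Nn+1}),
   the little-o expressed as: (difference) / x^{-2Nn+1} -> 0. *)
Definition has_sym_asymp_exp (M : R -> R -> R) (a : nat -> R) : Prop :=
  forall (t : R) (Nn : nat),
    is_lim
      (fun x => (M (x - t) (x + t)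
                 - sum_ft 0 Nn (fun n => a n * t ^ (2 * n) * x / x ^ (2 * n)))
                * x ^ (2 * Nn) / x)
      p_infty 0.

(* P[n,r,b]: coefficient of z^n in (sum_j b_j z^j)^r, via the recursion
   P[0,r,b] = b_0^r,
   P[n,r,b] = 1/(n b_0) sum_{k=1}^n (k(1+r)-n) b_k P[n-k,r,b].
   Ptab n j = P[j,r,b] for j <= n. b_0^r is the real power Rpower
   (only used with b_0 > 0 here). *)
Fixpoint Ptab (r : R) (b : nat -> R) (n : nat) : nat -> R :=
  match n with
  | O => fun _ => Rpower (b O) r
  | S n' =>
      let T := Ptab r b n' in
      fun j => if (j <=? n')%nat then T j
               else / (INR (S n') * b O) *
                    sum_ft 1 (S n')
                      (fun k => (INR k * (1 + r) - INR (S n')) * b k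
                                * T (S n' - k)%nat)
  end.

Definition P (n : nat) (r : R) (b : nat -> R) : R := Ptab r b n n.

(* g^M = (1, a_1, 0, a_2, 0, ...) *)
Definition gseq (a : nat -> R) (j : nat) : R :=
  match j with
  | O => 1
  | _ => if Nat.odd j then a (Nat.div2 (S j)) else 0
  end.

(* h^M = (2, -1, a_1, 0, a_2, 0, ...) *)
Definition hseq (a : nat -> R) (j : nat) : R :=
  match j with
  | O => 2
  | S O => -1
  | _ => if Nat.even j then a (Nat.div2 j) else 0
  end.

Definition conv (n L : nat) (g h : nat -> R) : R :=
  sum_ft 0 L (fun k => P k (2 * INR n) g * P (L - k)%nat (1 - 2 * INR n) h).

Definition dseq (aM aN : nat -> R) (m : nat) : R :=
  - / 2 * sum_ft 0 m (fun n => aN n * conv n (2 * m + 1 - 2 * n) (gseq aM) (hseq aM)).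

Definition sseq (aM aN : nat -> R) (m : nat) : R :=
  / 2 * sum_ft 0 m (fun n => aN n * conv n (2 * m - 2 * n) (gseq aM) (hseq aM)).

(* Main.v *)
Require Import Defs.
From Stdlib Require Import Reals Lra Lia FunctionalExtensionality.
From Coquelicot Require Import Coquelicot.
Open Scope R_scope.

Lemma sumR_ext n f g : (forall i, (i < n)%nat -> f i = g i) -> sumR n f = sumR n g.
Proof. induction n; simpl; intros H; auto. rewrite IHn by (intros; apply H; lia). rewrite H by lia; auto. Qed.

Lemma sumR_plus n f g : sumR n (fun i => f i + g i) = sumR n f + sumR n g.
Proof. induction n; simpl; [lra|]. rewrite IHn; lra. Qed.

Lemma sumR_minus n f g : sumR n (fun i => f i - g i) = sumR n f - sumR n g.
Proof. induction n; simpl; [lra|]. rewrite IHn; lra. Qed.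

Lemma sumR_scal n c f : sumR n (fun i => c * f i) = c * sumR n f.
Proof. induction n; simpl; [lra|]. rewrite IHn; lra. Qed.

Lemma sumR_S n f : sumR (S n) f = sumR n f + f n.
Proof. reflexivity. Qed.

Lemma sumR_first n f : sumR (S n) f = f O + sumR n (fun i => f (S i)).
Proof. induction n; simpl; [lra|]. simpl in IHn; rewrite IHn; lra. Qed.

Lemma sumR_zero n f : (forall i, (i < n)%nat -> f i = 0) -> sumR n f = 0.
Proof. intros H. rewrite (sumR_ext n f (fun _ => 0)) by auto. clear H; induction n; simpl; lra. Qed.

Lemma sumR_split n m f : sumR (n + m) f = sumR n f + sumR m (fun i => f (n + i)%nat).
Proof. induction m; simpl. rewrite Nat.add_0_r; lra. rewrite Nat.add_succ_r; simpl; rewrite IHm; lra. Qed.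

Lemma sumR_rev n f : sumR n f = sumR n (fun i => f (n - 1 - i)%nat).
Proof.
  induction n; auto.
  rewrite (sumR_first n (fun i => f (S n - 1 - i)%nat)).
  change (sumR (S n) f) with (sumR n f + f n). rewrite IHn.
  replace (S n - 1 - 0)%nat with n by lia.
  rewrite Rplus_comm. f_equal. apply sumR_ext; intros; f_equal; lia.
Qed.

Definition cp (a b : nat -> R) (k : nat) : R := sumR (S k) (fun j => a j * b (k - j)%nat).
Definition polyR (c : nat -> R) (x : R) (K : nat) : R := sumR (S K) (fun k => c k * x ^ k).
Definition shift (c : nat -> R) (k : nat) : R := c (S k).
Definition Dseq (c : nat -> R) (k : nat) : R := INR (S k) * c (S k).

Lemma cp_shift a b k : cp a b (S k) = cp a (shift b) k + a (S k) * b O.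
Proof.
  unfold cp. rewrite sumR_S. f_equal. apply sumR_ext; intros i Hi.
  unfold shift. f_equal. f_equal. lia. rewrite Nat.sub_diag; auto.
Qed.

Lemma polyR_S c x K : polyR c x (S K) = c O + x * polyR (shift c) x K.
Proof.
  unfold polyR. rewrite sumR_first, <- sumR_scal. f_equal; [simpl; lra|].
  apply sumR_ext; intros; unfold shift; simpl; lra.
Qed.

Lemma Dseq_cp a b k : Dseq (cp a b) k = cp (Dseq a) b k + cp a (Dseq b) k.
Proof.
  unfold Dseq, cp.
  transitivity (sumR (S (S k)) (fun j => INR j * (a j * b (S k - j)%nat))
              + sumR (S (S k)) (fun j => INR (S k - j) * (a j * b (S k - j)%nat))).
  { rewrite <- sumR_plus, <- sumR_scal. apply sumR_ext; intros i Hi.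
    rewrite <- Rmult_plus_distr_r. f_equal. rewrite <- plus_INR. f_equal; lia. }
  f_equal.
  - rewrite sumR_first. simpl (INR 0). rewrite Rmult_0_l, Rplus_0_l.
    apply sumR_ext; intros i Hi. simpl (S k - S i)%nat. lra.
  - rewrite sumR_S. rewrite Nat.sub_diag. simpl (INR 0). rewrite Rmult_0_l, Rplus_0_r.
    apply sumR_ext; intros i Hi. replace (S k - i)%nat with (S (k - i)) by lia. lra.
Qed.
Definition L0 (f : R -> R) (l : R) : Prop := is_lim f 0 l.

Lemma L0_plus f g a b : L0 f a -> L0 g b -> L0 (fun u => f u + g u) (a + b).
Proof. apply is_lim_plus'. Qed.
Lemma L0_minus f g a b : L0 f a -> L0 g b -> L0 (fun u => f u - g u) (a - b).
Proof. apply is_lim_minus'. Qed.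
Lemma L0_mult f g a b : L0 f a -> L0 g b -> L0 (fun u => f u * g u) (a * b).
Proof. intros H1 H2. apply (is_lim_mult f g 0 a b H1 H2). simpl; auto. Qed.
Lemma L0_const a : L0 (fun _ => a) a.
Proof. apply is_lim_const. Qed.
Lemma L0_id : L0 (fun u => u) 0.
Proof. apply is_lim_id. Qed.
Lemma L0_inv f a : L0 f a -> a <> 0 -> L0 (fun u => / f u) (/ a).
Proof. intros H Ha. apply (is_lim_inv f 0 a H). intro E; injection E; auto. Qed.
Lemma L0_ext f g a : Rbar_locally' 0 (fun u => f u = g u) -> L0 f a -> L0 g a.
Proof. apply is_lim_ext_loc. Qed.
Lemma L0_ext' f g a : (forall u, f u = g u) -> L0 f a -> L0 g a.
Proof. intros H; apply L0_ext. apply filter_forall; auto. Qed.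
Lemma L0_pow f a n : L0 f a -> L0 (fun u => f u ^ n) (a ^ n).
Proof. intros H; induction n; simpl. apply L0_const. apply L0_mult; auto. Qed.
Lemma L0_unique f a b : L0 f a -> L0 f b -> a = b.
Proof. intros H1 H2. apply is_lim_unique in H1. apply is_lim_unique in H2.
  rewrite H1 in H2. injection H2; auto. Qed.
Lemma L0_neq f a : L0 f a -> a <> 0 -> Rbar_locally' 0 (fun u => f u <> 0).
Proof.
  intros H Ha. apply is_lim_spec in H. simpl in H.
  assert (He : 0 < Rabs a) by (apply Rabs_pos_lt; auto).
  specialize (H (mkposreal _ He)). eapply filter_imp; [|exact H].
  simpl. intros u Hu E. rewrite E in Hu. rewrite Rminus_0_l, Rabs_Ropp in Hu. lra.
Qed.

Definition ex (e f : R -> R) (c : nat -> R) (K : nat) : Prop :=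
  L0 (fun u => (f u - polyR c (e u) K) / (e u) ^ K) 0.

Definition gauge (e : R -> R) : Prop := L0 e 0 /\ Rbar_locally' 0 (fun u => e u <> 0).

Lemma ex_ext e f g c d K : Rbar_locally' 0 (fun u => f u = g u) ->
  (forall k, (k <= K)%nat -> c k = d k) -> ex e f c K -> ex e g d K.
Proof.
  intros Hf Hc H. unfold ex. eapply L0_ext; [|exact H].
  eapply filter_imp; [|exact Hf]. intros u Hu. simpl. rewrite Hu. f_equal. f_equal.
  unfold polyR. apply sumR_ext. intros i Hi. rewrite Hc by lia. auto.
Qed.

Lemma polyR_lim e c K : L0 e 0 -> L0 (fun u => polyR c (e u) K) (c O).
Proof.
  intros He. induction K.
  - unfold polyR. simpl. eapply L0_ext'; [|apply L0_const]. intros; simpl; ring.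
  - replace (c O) with (c O + c (S K) * 0 ^ (S K)) by (simpl; ring).
    apply (L0_ext' (fun u => polyR c (e u) K + c (S K) * e u ^ S K)).
    + intros u. unfold polyR. rewrite (sumR_S (S K)). auto.
    + apply L0_plus. apply IHK. apply L0_mult. apply L0_const. apply L0_pow; auto.
Qed.

Lemma ex_S_iff e f c K : gauge e ->
  (ex e f c (S K) <-> L0 f (c O) /\ ex e (fun u => (f u - c O) / e u) (shift c) K).
Proof.
  intros [He0 He]. 
  assert (Hpt : Rbar_locally' 0 (fun u =>
     (f u - polyR c (e u) (S K)) / e u ^ S K =
     ((f u - c O) / e u - polyR (shift c) (e u) K) / e u ^ K)).
  { eapply filter_imp; [|exact He]. intros u Hu. rewrite polyR_S. change (e u ^ S K) with (e u * e u ^ K).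
    field. split; auto. apply pow_nonzero; auto. }
  split.
  - intros H. split.
    + replace (c O) with (0 * 0 ^ S K + c O) by (simpl; ring). eapply L0_ext.
      2: { apply L0_plus. apply L0_mult. exact H. apply L0_pow. exact He0. apply (polyR_lim e c (S K)). exact He0. }
      eapply filter_imp; [|exact He]. intros u Hu. cbv beta. change (e u ^ S K) with (e u * e u ^ K). field. split; [apply pow_nonzero|]; auto.
    + unfold ex. eapply L0_ext; [exact Hpt | exact H].
  - intros [_ H]. unfold ex. eapply L0_ext; [|exact H].
    eapply filter_imp; [|exact Hpt]. intros u Hu; auto.
Qed.

Lemma ex_0_iff e f c : ex e f c 0 <-> L0 f (c O).
Proof.
  unfold ex, polyR. simpl. split; intros H.
  - replace (c O) with (0 + c O) by ring.
    apply (L0_ext' (fun u => (f u - (0 + c O * 1)) / 1 + c O)). intros; field.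
    apply L0_plus; auto. apply L0_const.
  - replace 0 with (c O - c O) by ring.
    apply (L0_ext' (fun u => f u - c O)). intros; field.
    apply L0_minus; auto. apply L0_const.
Qed.

Lemma ex0_to e f c : ex e f c 0 -> L0 f (c O). Proof. destruct (ex_0_iff e f c); auto. Qed.
Lemma ex0_of e f c : L0 f (c O) -> ex e f c 0. Proof. destruct (ex_0_iff e f c); auto. Qed.
Lemma exS_to e f c K : gauge e -> ex e f c (S K) -> L0 f (c O) /\ ex e (fun u => (f u - c O) / e u) (shift c) K.
Proof. intros Hg; destruct (ex_S_iff e f c K Hg); auto. Qed.
Lemma exS_of e f c K : gauge e -> L0 f (c O) -> ex e (fun u => (f u - c O) / e u) (shift c) K -> ex e f c (S K).
Proof. intros Hg; destruct (ex_S_iff e f c K Hg); auto. Qed.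

Lemma ex_lim e f c K : gauge e -> ex e f c K -> L0 f (c O).
Proof. intros Hg H. destruct K. apply (ex0_to e); auto. apply exS_to in H; tauto. Qed.

Lemma ex_down e f c K : gauge e -> ex e f c (S K) -> ex e f c K.
Proof.
  intros Hg. revert f c. induction K; intros f c H.
  - apply ex0_of. apply (ex_lim e f c 1); auto.
  - apply exS_to in H; auto. destruct H as [H1 H2]. apply exS_of; auto.
Qed.

Lemma ex_down_le e f c K K' : gauge e -> (K' <= K)%nat -> ex e f c K -> ex e f c K'.
Proof. intros Hg Hle. induction Hle; auto. intros H; apply IHHle. apply ex_down; auto. Qed.

Lemma ex_plus e f g c d K : ex e f c K -> ex e g d K ->
  ex e (fun u => f u + g u) (fun k => c k + d k) K.
Proof.
  unfold ex. intros H1 H2. replace 0 with (0 + 0) by ring.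
  eapply L0_ext'; [|apply L0_plus; [exact H1|exact H2]].
  intros u. cbv beta. unfold polyR. 
  rewrite (sumR_ext (S K) (fun k => (c k + d k) * e u ^ k) (fun i => c i * e u ^ i + d i * e u ^ i)) by (intros; ring).
  rewrite sumR_plus.
  unfold Rdiv. ring.
Qed.

Lemma ex_scal e f c K a : ex e f c K -> ex e (fun u => a * f u) (fun k => a * c k) K.
Proof.
  unfold ex. intros H. replace 0 with (a * 0) by ring.
  eapply L0_ext'; [|apply L0_mult; [apply L0_const|exact H]].
  intros u. cbv beta. unfold polyR.
  rewrite (sumR_ext (S K) (fun k => (a * c k) * e u ^ k) (fun i => a * (c i * e u ^ i))) by (intros; ring).
  rewrite sumR_scal.
  unfold Rdiv. ring.
Qed.

Definition cst (a : R) (k : nat) : R := match k with O => a | _ => 0 end.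

Lemma polyR_cst a x K : polyR (cst a) x K = a.
Proof. induction K. unfold polyR; simpl; ring. unfold polyR in *. rewrite sumR_S, IHK. simpl; ring. Qed.

Lemma ex_const e a K : ex e (fun _ => a) (cst a) K.
Proof.
  unfold ex. eapply L0_ext'; [|apply L0_const]. intros u. cbv beta. rewrite polyR_cst.
  unfold Rdiv. ring.
Qed.

Lemma cp_0 a b : cp a b O = a O * b O.
Proof. unfold cp. simpl. ring. Qed.

Lemma ex_mult e K : gauge e -> forall f g c d, ex e f c K -> ex e g d K ->
  ex e (fun u => f u * g u) (cp c d) K.
Proof.
  intros Hg. induction K; intros f g c d H1 H2.
  - apply ex0_of. apply ex0_to in H1. apply ex0_to in H2. rewrite cp_0. apply L0_mult; auto.
  - apply exS_to in H1; auto. apply exS_to in H2; auto.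
    destruct H1 as [H1a H1b]; destruct H2 as [H2a H2b]. apply exS_of; auto.
    + rewrite cp_0. apply L0_mult; auto.
    + rewrite cp_0. assert (Hf : ex e f c K) by (apply ex_down; auto; apply exS_of; auto).
      pose proof (IHK _ _ _ _ Hf H2b) as P1.
      pose proof (ex_scal _ _ _ _ (d O) H1b) as P2.
      pose proof (ex_plus _ _ _ _ _ _ P1 P2) as P3.
      eapply ex_ext; [| | exact P3].
      * apply filter_forall. intros u. cbv beta. unfold Rdiv. ring.
      * intros k _. replace (shift (cp c d) k) with (cp c d (S k)) by reflexivity.
        rewrite cp_shift. unfold shift at 2. ring.
Qed.

Lemma ex_pow e K f c n : gauge e -> ex e f c K ->
  ex e (fun u => f u ^ n) (Nat.iter n (cp c) (cst 1)) K.
Proof.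
  intros Hg H. induction n; simpl.
  - eapply ex_ext; [| |apply ex_const]. apply filter_forall; auto. auto.
  - apply ex_mult; auto.
Qed.

Definition is_inv (c i : nat -> R) : Prop :=
  i O = / c O /\ forall k, i (S k) = - / c O * cp (shift c) i k.

Lemma ex_inv e K : gauge e -> forall f c i, c O <> 0 -> is_inv c i -> ex e f c K ->
  ex e (fun u => / f u) i K.
Proof.
  intros Hg. induction K; intros f c i Hc [Hi0 HiS] H.
  - apply ex0_of. apply ex0_to in H. rewrite Hi0. apply L0_inv; auto.
  - pose proof (ex_lim _ _ _ _ Hg H) as Hl.
    pose proof (L0_neq _ _ Hl Hc) as Hnz.
    apply exS_of; auto.
    + rewrite Hi0. apply L0_inv; auto.
    + apply exS_to in H; auto. destruct H as [_ H].
      assert (Hf : ex e f c K) by (apply ex_down; auto; apply exS_of; auto).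
      pose proof (IHK _ _ _ Hc (conj Hi0 HiS) Hf) as Hv.
      pose proof (ex_mult e K Hg _ _ _ _ H Hv) as P.
      pose proof (ex_scal _ _ _ _ (- / c O) P) as P2.
      eapply ex_ext; [| | exact P2].
      * eapply filter_imp; [|exact (filter_and _ _ Hnz (proj2 Hg))]. intros u [Hu Hu']. cbv beta. rewrite Hi0.
        unfold Rdiv. field. auto.
      * intros k _. unfold shift. rewrite HiS. auto.
Qed.

Lemma ex_unique e K : gauge e -> forall f c d, ex e f c K -> ex e f d K ->
  forall k, (k <= K)%nat -> c k = d k.
Proof.
  intros Hg. induction K; intros f c d H1 H2 k Hk.
  - apply ex0_to in H1; apply ex0_to in H2. replace k with O by lia. eapply L0_unique; eauto.
  - apply exS_to in H1; auto; apply exS_to in H2; auto.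
    destruct H1 as [H1a H1b]; destruct H2 as [H2a H2b].
    pose proof (L0_unique _ _ _ H1a H2a) as E0.
    destruct k. auto. rewrite E0 in H1b.
    apply (IHK _ _ _ H1b H2b k). lia.
Qed.

Definition cst1 (k : nat) : R := match k with 1%nat => 1 | _ => 0 end.

Lemma polyR_ext c d x K : (forall k, (k <= K)%nat -> c k = d k) -> polyR c x K = polyR d x K.
Proof. intros H. unfold polyR. apply sumR_ext. intros i Hi. rewrite H by lia; auto. Qed.

Lemma ex_self e K : gauge e -> ex e e cst1 K.
Proof.
  intros Hg. destruct K.
  - apply ex0_of. apply Hg.
  - unfold ex. eapply L0_ext'; [|apply L0_const]. intros u. cbv beta.
    rewrite polyR_S. rewrite (polyR_ext _ (cst 1)). rewrite polyR_cst. simpl. unfold Rdiv. ring.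
    intros [|k] _; reflexivity.
Qed.

Definition cons0 (c : nat -> R) (k : nat) : R := match k with O => 0 | S k' => c k' end.

Lemma cp_cst1 c k : cp cst1 c k = cons0 c k.
Proof.
  unfold cp. destruct k.
  - simpl. ring.
  - rewrite sumR_first, sumR_first. simpl (cst1 0). simpl (cst1 1).
    rewrite sumR_zero. simpl. rewrite Nat.sub_0_r. ring.
    intros i _. simpl. ring.
Qed.

Lemma ex_mul_e e f c K : gauge e -> ex e f c K -> ex e (fun u => e u * f u) (cons0 c) K.
Proof.
  intros Hg H. pose proof (ex_mult e K Hg _ _ _ _ (ex_self e K Hg) H) as P.
  eapply ex_ext; [apply filter_forall; reflexivity| |exact P]. intros; apply cp_cst1.
Qed.

Definition shiftR (j : nat) (c : nat -> R) (k : nat) : R := if (j <=? k)%nat then c (k - j)%nat else 0.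

Lemma ex_mul_pow e f c K j : gauge e -> ex e f c K -> ex e (fun u => e u ^ j * f u) (shiftR j c) K.
Proof.
  intros Hg H. induction j.
  - eapply ex_ext; [apply filter_forall| |exact H]. intros; simpl; ring. intros k _. unfold shiftR. simpl. rewrite Nat.sub_0_r. auto.
  - pose proof (ex_mul_e e _ _ K Hg IHj) as P. eapply ex_ext; [apply filter_forall| |exact P].
    intros; simpl; ring. intros [|k] _; unfold shiftR; simpl; auto.
Qed.

Lemma ex_sumR e K n (F : nat -> R -> R) (C : nat -> nat -> R) :
  (forall i, (i < n)%nat -> ex e (F i) (C i) K) ->
  ex e (fun u => sumR n (fun i => F i u)) (fun k => sumR n (fun i => C i k)) K.
Proof.
  induction n; intros H.
  - simpl. eapply ex_ext; [apply filter_forall; reflexivity| |apply (ex_const e 0 K)].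
    intros [|k] _; reflexivity.
  - simpl. apply ex_plus. apply IHn; intros; apply H; lia. apply H; lia.
Qed.

Definition gid (u : R) : R := u.
Definition gsq (u : R) : R := u ^ 2.

Lemma gauge_id : gauge gid.
Proof. split. apply L0_id. unfold gid. simpl. exists (mkposreal 1 Rlt_0_1). intros y _ H; exact H. Qed.

Lemma gauge_sq : gauge gsq.
Proof. split. replace 0 with (0 ^ 2) by (simpl; ring). apply L0_pow. apply L0_id.
  exists (mkposreal 1 Rlt_0_1). intros y _ H; unfold gsq. apply pow_nonzero; auto. Qed.

Definition alt (c : nat -> R) (k : nat) : R := (-1) ^ k * c k.

Lemma L0_opp_id : L0 (fun u => - u) 0.
Proof. replace 0 with (-1 * 0) by ring. eapply L0_ext'; [|apply L0_mult; [apply L0_const|apply L0_id]].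
  intros; simpl; ring. Qed.

Lemma ex_neg f c K : ex gid f c K -> ex gid (fun u => f (- u)) (alt c) K.
Proof.
  unfold ex. intros H.
  assert (H2 : L0 (fun u => (-1) ^ K * ((f (- u) - polyR c (gid (- u)) K) / gid (- u) ^ K)) 0).
  { replace 0 with ((-1) ^ K * 0) by ring. apply L0_mult. apply L0_const.
    unfold L0. apply (is_lim_comp (fun v => (f v - polyR c (gid v) K) / gid v ^ K) (fun u => - u) 0 0 0). exact H.
    apply L0_opp_id.
    exists (mkposreal 1 Rlt_0_1). intros y _ Hy. simpl. intro E; apply Hy. injection E. lra. }
  eapply L0_ext; [|exact H2]. exists (mkposreal 1 Rlt_0_1). intros u _ Hu. unfold gid.
  replace (polyR (alt c) u K) with (polyR c (- u) K).
  2: { unfold polyR. apply sumR_ext. intros i _. unfold alt. replace (- u) with (-1 * u) by ring.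
       rewrite Rpow_mult_distr. ring. }
  assert (Hn : (-1) ^ K <> 0) by (apply pow_nonzero; lra).
  assert (Hu' : u ^ K <> 0) by (apply pow_nonzero; lra).
  replace (- u) with (-1 * u) by ring. rewrite Rpow_mult_distr.
  field. auto.
Qed.

Lemma polyR_even c x K : (forall m, c (S (2 * m)) = 0) ->
  polyR c x (2 * K) = polyR (fun m => c (2 * m)%nat) (x ^ 2) K.
Proof.
  intros H. induction K.
  - unfold polyR; simpl. ring.
  - replace (2 * S K)%nat with (S (S (2 * K))) by lia. unfold polyR in *.
    rewrite sumR_S, sumR_S, IHK, H, (sumR_S (S K)).
    replace (S (S (2 * K))) with (2 * S K)%nat by lia. rewrite pow_mult. ring.
Qed.

Lemma ex_even_to f c K : (forall m, c (S (2 * m)) = 0) -> ex gid f c (2 * K) ->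
  ex gsq f (fun m => c (2 * m)%nat) K.
Proof.
  intros H E. unfold ex in *. eapply L0_ext'; [|exact E]. intros u. unfold gid, gsq.
  rewrite polyR_even by auto. rewrite pow_mult. auto.
Qed.

Definition dil (a : nat -> R) (k : nat) : R := if Nat.even k then a (Nat.div2 k) else 0.

Lemma dil_even a m : dil a (2 * m) = a m.
Proof. unfold dil. rewrite Nat.even_even, Nat.div2_double. auto. Qed.
Lemma dil_odd a m : dil a (S (2 * m)) = 0.
Proof. unfold dil. replace (S (2 * m)) with (2 * m + 1)%nat by lia. rewrite Nat.even_odd. auto. Qed.

Lemma ex_even_of f a K : ex gsq f a K -> ex gid f (dil a) (2 * K).
Proof.
  intros E. unfold ex in *. eapply L0_ext'; [|exact E]. intros u. unfold gid, gsq.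
  rewrite polyR_even by (apply dil_odd). rewrite pow_mult.
  rewrite (polyR_ext (fun m => dil a (2 * m)%nat) a). auto. intros; apply dil_even.
Qed.

Lemma cp_comm a b : cp a b = cp b a.
Proof.
  apply functional_extensionality. intros k. unfold cp. rewrite sumR_rev.
  apply sumR_ext. intros i Hi. replace (S k - 1 - i)%nat with (k - i)%nat by lia.
  replace (k - (k - i))%nat with i by lia. ring.
Qed.

Lemma cp_plus_r a b c : cp a (fun k => b k + c k) = (fun k => cp a b k + cp a c k).
Proof. apply functional_extensionality; intros k. unfold cp. rewrite <- sumR_plus. apply sumR_ext; intros; ring. Qed.

Lemma cp_scal_r a b r : cp a (fun k => r * b k) = (fun k => r * cp a b k).
Proof. apply functional_extensionality; intros k. unfold cp. rewrite <- sumR_scal. apply sumR_ext; intros; ring. Qed.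

Lemma cp_scal_l a b r : cp (fun k => r * a k) b = (fun k => r * cp a b k).
Proof. rewrite cp_comm, cp_scal_r, cp_comm. auto. Qed.

Lemma ex_polyR c K : ex gid (fun u => polyR c u K) c K.
Proof. unfold ex. eapply L0_ext'; [|apply L0_const]. intros u. unfold gid. unfold Rdiv. ring. Qed.

Lemma cp_assoc a b c : cp (cp a b) c = cp a (cp b c).
Proof.
  apply functional_extensionality; intros k.
  pose proof (ex_mult gid k gauge_id _ _ _ _ (ex_mult gid k gauge_id _ _ _ _ (ex_polyR a k) (ex_polyR b k)) (ex_polyR c k)) as P1.
  pose proof (ex_mult gid k gauge_id _ _ _ _ (ex_polyR a k) (ex_mult gid k gauge_id _ _ _ _ (ex_polyR b k) (ex_polyR c k))) as P2.
  eapply (ex_unique gid k gauge_id _ _ _ P1); [|lia].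
  eapply ex_ext; [| |exact P2]. apply filter_forall; intros; ring. auto.
Qed.

Lemma Ptab_stable r b n j : (j <= n)%nat -> Ptab r b n j = P j r b.
Proof.
  unfold P. induction n; intros H.
  - replace j with O by lia. auto.
  - simpl. destruct (Nat.leb_spec j n). apply IHn; auto.
    replace j with (S n) by lia. cbn [Ptab]. rewrite (proj2 (Nat.leb_gt (S n) n)) by lia. reflexivity.
Qed.

Lemma P_S n r b : P (S n) r b = / (INR (S n) * b O) *
  sumR (S n) (fun i => (INR (S i) * (1 + r) - INR (S n)) * b (S i) * P (n - i)%nat r b).
Proof.
  unfold P at 1. cbn [Ptab]. rewrite (proj2 (Nat.leb_gt (S n) n)) by lia. f_equal. unfold sum_ft.
  replace (S (S n) - 1)%nat with (S n) by lia. apply sumR_ext. intros i Hi.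
  simpl (1 + i)%nat. rewrite Ptab_stable by lia. simpl. auto.
Qed.

Lemma P_0 r b : P O r b = Rpower (b O) r.
Proof. reflexivity. Qed.

Definition Qp (r : R) (b F : nat -> R) : Prop := forall n, r * cp (Dseq b) F n = cp b (Dseq F) n.

Lemma Qp_rec_iff r b F n :
  r * cp (Dseq b) F n - cp b (Dseq F) n =
  sumR (S n) (fun i => (INR (S i) * (1 + r) - INR (S n)) * b (S i) * F (n - i)%nat)
  - INR (S n) * b O * F (S n).
Proof.
  assert (A1 : cp b (Dseq F) n = b O * (INR (S n) * F (S n)) +
      sumR (S n) (fun i => b (S i) * (INR (n - i) * F (n - i)%nat))).
  { unfold cp. rewrite sumR_first. rewrite Nat.sub_0_r. unfold Dseq at 1. f_equal.
    rewrite sumR_S. replace (n - n)%nat with O by lia. simpl (INR 0). rewrite Rmult_0_l, Rmult_0_r, Rplus_0_r.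
    apply sumR_ext. intros i Hi. unfold Dseq. replace (S (n - S i)) with (n - i)%nat by lia. auto. }
  assert (A2 : r * cp (Dseq b) F n = sumR (S n) (fun i => r * INR (S i) * b (S i) * F (n - i)%nat)).
  { unfold cp. rewrite <- sumR_scal. apply sumR_ext. intros i _. unfold Dseq. ring. }
  rewrite A1, A2.
  assert (A3 : sumR (S n) (fun i => (INR (S i) * (1 + r) - INR (S n)) * b (S i) * F (n - i)%nat)
    = sumR (S n) (fun i => r * INR (S i) * b (S i) * F (n - i)%nat) - sumR (S n) (fun i => b (S i) * (INR (n - i) * F (n - i)%nat))).
  { rewrite <- sumR_minus. apply sumR_ext. intros i Hi.
    replace (INR (S n)) with (INR (S i) + INR (n - i)). ring. rewrite <- plus_INR. f_equal. lia. }
  rewrite A3. ring.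
Qed.

Lemma Qp_of_rec r b F : (forall n, INR (S n) * b O * F (S n) =
  sumR (S n) (fun i => (INR (S i) * (1 + r) - INR (S n)) * b (S i) * F (n - i)%nat)) -> Qp r b F.
Proof. intros H n. pose proof (Qp_rec_iff r b F n) as E. rewrite H in E. lra. Qed.

Lemma rec_of_Qp r b F : Qp r b F -> forall n, INR (S n) * b O * F (S n) =
  sumR (S n) (fun i => (INR (S i) * (1 + r) - INR (S n)) * b (S i) * F (n - i)%nat).
Proof. intros H n. pose proof (Qp_rec_iff r b F n) as E. rewrite H in E. lra. Qed.

Lemma Qp_P r b : b O <> 0 -> Qp r b (fun k => P k r b).
Proof.
  intros Hb. apply Qp_of_rec. intros n. rewrite P_S. field. split; auto. apply not_0_INR. lia.
Qed.

Lemma Qp_unique r b F : b O <> 0 -> Qp r b F -> F O = Rpower (b O) r -> forall n, F n = P n r b.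
Proof.
  intros Hb HQ H0. pose proof (rec_of_Qp _ _ _ HQ) as HF. pose proof (rec_of_Qp _ _ _ (Qp_P r b Hb)) as HP.
  intros n. induction n as [n IH] using (well_founded_induction Nat.lt_wf_0).
  destruct n. rewrite H0; auto.
  assert (Hn : INR (S n) * b O <> 0) by (apply Rmult_integral_contrapositive; split; auto; apply not_0_INR; lia).
  apply (Rmult_eq_reg_l (INR (S n) * b O)); auto.
  rewrite HF, HP. apply sumR_ext. intros i Hi. rewrite IH by lia. auto.
Qed.

Lemma Dseq_cst1 : Dseq (cst 1) = cst 0.
Proof. apply functional_extensionality. intros [|k]; unfold Dseq; simpl; ring. Qed.

Lemma cp_cst0 a : cp a (cst 0) = cst 0.
Proof. apply functional_extensionality. intros k. unfold cp. rewrite sumR_zero. destruct k; auto.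
  intros i _. destruct (k - i)%nat; simpl; ring. Qed.

Lemma cp_cst1_l a : cp (cst 1) a = a.
Proof. apply functional_extensionality. intros k. unfold cp. rewrite sumR_first. rewrite sumR_zero.
  simpl. rewrite Nat.sub_0_r. ring. intros; simpl; ring. Qed.

Lemma Dseq_cp_f a b : Dseq (cp a b) = (fun k => cp (Dseq a) b k + cp a (Dseq b) k).
Proof. apply functional_extensionality; intros k; apply Dseq_cp. Qed.

Lemma Qp_fun r b F : Qp r b F <-> (fun n => r * cp (Dseq b) F n) = cp b (Dseq F).
Proof. split. intros H; apply functional_extensionality; auto. intros H n. exact (equal_f H n). Qed.

Lemma Qp_mult r1 r2 b F1 F2 : Qp r1 b F1 -> Qp r2 b F2 -> Qp (r1 + r2) b (cp F1 F2).
Proof.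
  rewrite !Qp_fun. intros H1 H2.
  rewrite Dseq_cp_f, cp_plus_r.
  assert (E1 : cp b (cp (Dseq F1) F2) = cp (fun n => r1 * cp (Dseq b) F1 n) F2).
  { rewrite H1. rewrite cp_assoc. auto. }
  assert (E2 : cp b (cp F1 (Dseq F2)) = cp (fun n => r2 * cp (Dseq b) F2 n) F1).
  { rewrite H2. rewrite (cp_comm F1 (Dseq F2)). rewrite cp_assoc. auto. }
  rewrite E1, E2, !cp_scal_l, !cp_assoc, (cp_comm F2 F1).
  apply functional_extensionality; intros k. ring.
Qed.

Lemma Pmul r1 r2 b : 0 < b O -> cp (fun k => P k r1 b) (fun k => P k r2 b) = (fun k => P k (r1 + r2) b).
Proof.
  intros Hb. apply functional_extensionality. apply Qp_unique. lra.
  apply Qp_mult; apply Qp_P; lra.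
  rewrite cp_0, !P_0. rewrite Rpower_plus. ring.
Qed.

Lemma P_zero b : 0 < b O -> (fun k => P k 0 b) = cst 1.
Proof.
  intros Hb. symmetry. apply functional_extensionality. apply Qp_unique. lra.
  intros n. rewrite Dseq_cst1, cp_cst0. simpl. destruct n; simpl; ring.
  rewrite Rpower_O; auto.
Qed.

Lemma P_one b : 0 < b O -> (fun k => P k 1 b) = b.
Proof.
  intros Hb. symmetry. apply functional_extensionality. apply Qp_unique. lra.
  intros n. rewrite Rmult_1_l. rewrite cp_comm. auto.
  rewrite Rpower_1; auto.
Qed.

Lemma P_nat b n : 0 < b O -> Nat.iter n (cp b) (cst 1) = (fun k => P k (INR n) b).
Proof.
  intros Hb. induction n.
  - simpl. rewrite P_zero; auto.
  - simpl Nat.iter. rewrite IHn. rewrite <- (P_one b) at 1 by auto. rewrite Pmul by auto.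
    rewrite S_INR. apply functional_extensionality; intros; f_equal; ring.
Qed.

Lemma P_inv b r : 0 < b O -> is_inv (fun k => P k r b) (fun k => P k (- r) b).
Proof.
  intros Hb. split.
  - rewrite !P_0. rewrite Rpower_Ropp. auto.
  - intros k. pose proof (Pmul (- r) r b Hb) as E. replace (- r + r) with 0 in E by ring.
    rewrite P_zero in E by auto. pose proof (equal_f E (S k)) as E1. simpl in E1.
    rewrite cp_shift in E1. rewrite P_0 in E1.
    assert (Hp : Rpower (b O) r <> 0) by (unfold Rpower; apply Rgt_not_eq, exp_pos).
    rewrite cp_comm. unfold shift. unfold shift in E1. field_simplify_eq; [|auto]. 
    rewrite P_0. lra.
Qed.

Lemma ex_Ppow e f b K n : gauge e -> 0 < b O -> ex e f b K ->
  ex e (fun u => f u ^ (2 * n)) (fun k => P k (2 * INR n) b) K.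
Proof.
  intros Hg Hb H. pose proof (ex_pow e K f b (2 * n) Hg H) as P1. rewrite P_nat in P1 by auto.
  rewrite mult_INR in P1. simpl (INR 2) in P1. replace (1 + 1) with 2 in P1 by ring. exact P1.
Qed.

Lemma ex_Pneg e f b K n : gauge e -> 0 < b O -> ex e f b K ->
  ex e (fun u => f u / f u ^ (2 * n)) (fun k => P k (1 - 2 * INR n) b) K.
Proof.
  intros Hg Hb H. pose proof (ex_Ppow e f b K n Hg Hb H) as P1.
  assert (Hc : P O (2 * INR n) b <> 0) by (rewrite P_0; unfold Rpower; apply Rgt_not_eq, exp_pos).
  pose proof (ex_inv e K Hg _ (fun k => P k (2 * INR n) b) _ Hc (P_inv b (2 * INR n) Hb) P1) as P2.
  pose proof (ex_mult e K Hg _ _ _ _ H P2) as P3.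
  assert (Eq : cp b (fun k => P k (- (2 * INR n)) b) = (fun k => P k (1 + - (2 * INR n)) b)).
  { rewrite <- Pmul by auto. rewrite P_one by auto. auto. }
  rewrite Eq in P3.
  eapply ex_ext; [apply filter_forall| |exact P3]. intros; unfold Rdiv; auto.
  intros k _. replace (1 - 2 * INR n) with (1 + - (2 * INR n)) by ring. auto.
Qed.

Lemma polyR_at0 c K : polyR c 0 K = c O.
Proof. induction K. unfold polyR; simpl; ring. unfold polyR in *. rewrite sumR_S, IHK. simpl. ring. Qed.

Lemma lim_loc_of_L0 E : L0 E 0 -> E 0 = 0 -> filterlim E (locally 0) (locally 0).
Proof.
  intros H H0 Q HQ. specialize (H Q HQ). destruct H as [eps Heps]. exists eps. intros y Hy.
  destruct (Req_dec y 0) as [->|Hy0]. rewrite H0. apply locally_singleton; auto. apply Heps; auto.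
Qed.

Lemma comp_lemma phi a K v l : ex gsq phi a K -> phi 0 = a O -> L0 v 0 ->
  L0 (fun u => v u / u) l ->
  L0 (fun u => (phi (v u) - polyR a (v u ^ 2) K) / (u ^ 2) ^ K) 0.
Proof.
  intros H H0 Hv Hl.
  set (E := fun w => (phi w - polyR a (gsq w) K) / gsq w ^ K).
  assert (HE : filterlim E (locally 0) (locally 0)).
  { apply lim_loc_of_L0. exact H. unfold E, gsq. replace (0 ^ 2) with 0 by (simpl; ring).
    rewrite polyR_at0, H0. unfold Rdiv; ring. }
  assert (HEv : L0 (fun u => E (v u)) 0).
  { unfold L0, is_lim. eapply filterlim_comp. exact Hv. exact HE. }
  assert (HL := L0_mult _ _ _ _ HEv (L0_pow _ _ K (L0_pow _ _ 2 Hl))). rewrite Rmult_0_l in HL.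
  eapply L0_ext; [|exact HL].
  exists (mkposreal 1 Rlt_0_1). intros u _ Hu. unfold E, gsq.
  destruct (Req_dec (v u) 0) as [Hz|Hz].
  - rewrite Hz. replace (0 ^ 2) with 0 by (simpl; ring). rewrite polyR_at0, H0. unfold Rdiv. ring.
  - rewrite <- !pow_mult. unfold Rdiv. rewrite Rpow_mult_distr, pow_inv. field. split; apply pow_nonzero; auto.
Qed.

Definition phi (M : R -> R -> R) (u : R) : R := M (1 - u) (1 + u).

Lemma hyp_pt M a K x t u : is_homogeneous M -> 0 < x -> t = u * x -> t * t = 1 -> -1 < u < 1 ->
  (M (x - t) (x + t) - sum_ft 0 K (fun n => a n * t ^ (2 * n) * x / x ^ (2 * n))) * x ^ (2 * K) / x
  = (phi M u - polyR a (gsq u) K) / gsq u ^ K.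
Proof.
  intros Hh Hx Ht Htt Hu. subst t.
  assert (Hu0 : u <> 0) by (intro; subst; lra).
  replace (x - u * x) with (x * (1 - u)) by ring. replace (x + u * x) with (x * (1 + u)) by ring.
  rewrite Hh by lra.
  assert (Hs : sum_ft 0 K (fun n => a n * (u * x) ^ (2 * n) * x / x ^ (2 * n)) = x * polyR a (gsq u) K).
  { unfold sum_ft, polyR. replace (S K - 0)%nat with (S K) by lia. rewrite <- sumR_scal.
    apply sumR_ext. intros i _. simpl (0 + i)%nat. unfold gsq. rewrite <- pow_mult, Rpow_mult_distr.
    field. apply pow_nonzero; lra. }
  rewrite Hs. unfold phi, gsq.
  assert (H1 : (u ^ 2) ^ K * x ^ (2 * K) = 1).
  { rewrite <- pow_mult, <- Rpow_mult_distr, pow_mult. replace ((u * x) ^ 2) with 1 by (simpl; lra). apply pow1. }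
  assert (Hx2 : x ^ (2 * K) <> 0) by (apply pow_nonzero; lra).
  assert (Hu2 : (u ^ 2) ^ K <> 0) by (apply pow_nonzero, pow_nonzero; auto).
  assert (Hxk : x ^ (2 * K) = / (u ^ 2) ^ K).
  { apply (Rmult_eq_reg_l ((u ^ 2) ^ K)); auto. rewrite H1. field. auto. }
  rewrite Hxk. field. split; auto; lra.
Qed.

Lemma hyp_ex M a K : is_homogeneous M -> has_sym_asymp_exp M a -> ex gsq (phi M) a K.
Proof.
  intros Hh Ha. unfold ex, L0. apply is_lim_spec. intros eps.
  pose proof (proj2 (is_lim_spec _ _ _) (Ha 1 K) eps) as [M1 HM1].
  pose proof (proj2 (is_lim_spec _ _ _) (Ha (-1) K) eps) as [M2 HM2].
  set (B := Rmax 1 (Rmax M1 M2)).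
  assert (HB1 : 1 <= B) by apply Rmax_l.
  assert (HBM1 : M1 <= B) by (eapply Rle_trans; [apply Rmax_l|apply Rmax_r]).
  assert (HBM2 : M2 <= B) by (eapply Rle_trans; [apply Rmax_r|apply Rmax_r]).
  assert (HBp : 0 < / B) by (apply Rinv_0_lt_compat; lra).
  exists (mkposreal _ HBp). intros u Hu Hu0. change (Rabs (u + - 0) < / B) in Hu.
  rewrite Ropp_0, Rplus_0_r in Hu. simpl.
  assert (HiB : / B <= 1) by (rewrite <- Rinv_1; apply Rinv_le_contravar; lra).
  destruct (Rlt_or_le 0 u) as [Hp|Hn].
  - rewrite Rabs_pos_eq in Hu by lra.
    assert (Hx : B < / u).
    { rewrite <- (Rinv_inv B). apply Rinv_lt_contravar; auto. apply Rmult_lt_0_compat; lra. }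
    specialize (HM1 (/ u) ltac:(lra)). cbv beta in HM1.
    rewrite (hyp_pt M a K (/ u) 1 u) in HM1; auto.
    apply Rinv_0_lt_compat; lra. field; lra. ring. lra.
  - assert (Hn' : u < 0) by (destruct Hn; auto; exfalso; apply Hu0; auto).
    rewrite Rabs_left in Hu by lra.
    assert (Hx : B < / (- u)).
    { rewrite <- (Rinv_inv B). apply Rinv_lt_contravar; [apply Rmult_lt_0_compat|]; lra. }
    specialize (HM2 (/ (- u)) ltac:(lra)). cbv beta in HM2.
    rewrite (hyp_pt M a K (/ (- u)) (-1) u) in HM2; auto.
    all: try (apply Rinv_0_lt_compat; lra). field; lra. ring. lra.
Qed.

Lemma mean_11 M : is_mean M -> M 1 1 = 1.
Proof. intros H. destruct (H 1 1 Rlt_0_1 Rlt_0_1) as [A B].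
  rewrite Rmin_left in A by lra. rewrite Rmax_left in B by lra. lra. Qed.

Lemma phi0 M : is_mean M -> phi M 0 = 1.
Proof. intros H. unfold phi. replace (1 - 0) with 1 by ring. replace (1 + 0) with 1 by ring. apply mean_11; auto. Qed.

Lemma mean_bounds M s t : is_mean M -> 0 < s -> 0 < t ->
  (s <= t -> s <= M s t <= t) /\ (t <= s -> t <= M s t <= s).
Proof.
  intros H Hs Ht. destruct (H s t Hs Ht) as [A B]. split; intros Hst.
  rewrite Rmin_left in A by lra; rewrite Rmax_right in B by lra; lra.
  rewrite Rmin_right in A by lra; rewrite Rmax_left in B by lra; lra.
Qed.

Lemma phi_lim M : is_mean M -> L0 (phi M) 1.
Proof.
  intros H. unfold L0. apply is_lim_spec. intros eps.
  assert (Hd : 0 < Rmin eps 1) by (apply Rmin_glb_lt; [apply cond_pos|lra]).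
  exists (mkposreal _ Hd). intros u Hu _. change (Rabs (u + - 0) < Rmin eps 1) in Hu.
  rewrite Ropp_0, Rplus_0_r in Hu. simpl.
  assert (He : Rmin eps 1 <= eps) by apply Rmin_l. assert (H1 : Rmin eps 1 <= 1) by apply Rmin_r.
  apply Rabs_def2 in Hu. destruct Hu as [Hu1 Hu2].
  destruct (mean_bounds M (1 - u) (1 + u) H ltac:(lra) ltac:(lra)) as [A B].
  unfold phi. apply Rabs_def1.
  - destruct (Rle_dec (1 - u) (1 + u)); [specialize (A r)|specialize (B ltac:(lra))]; lra.
  - destruct (Rle_dec (1 - u) (1 + u)); [specialize (A r)|specialize (B ltac:(lra))]; lra.
Qed.

Lemma a0_one M a : is_mean M -> is_homogeneous M -> has_sym_asymp_exp M a -> a O = 1.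
Proof.
  intros Hm Hh Ha. pose proof (hyp_ex M a 0 Hh Ha) as E. apply ex0_to in E.
  eapply L0_unique; [exact E|apply phi_lim; auto].
Qed.

Lemma ex_add_rem e f r c K : ex e f c K -> L0 (fun u => r u / e u ^ K) 0 ->
  ex e (fun u => f u + r u) c K.
Proof.
  unfold ex. intros H1 H2. replace 0 with (0 + 0) by ring.
  eapply L0_ext'; [|apply L0_plus; [exact H1|exact H2]]. intros u. cbv beta. unfold Rdiv. ring.
Qed.

Lemma near1 (Q : R -> Prop) : (forall u, -1 < u < 1 -> u <> 0 -> Q u) -> Rbar_locally' 0 Q.
Proof.
  intros H. exists (mkposreal 1 Rlt_0_1). intros u Hu Hu0. change (Rabs (u + - 0) < 1) in Hu.
  rewrite Ropp_0, Rplus_0_r in Hu. apply Rabs_def2 in Hu. apply H; auto; lra.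
Qed.

Definition Xs (n : nat) (a b : nat -> R) : nat -> R :=
  cp (fun k => P k (2 * INR n) a) (fun k => P k (1 - 2 * INR n) b).

Lemma conv_Xs n L a b : conv n L a b = Xs n a b L.
Proof. reflexivity. Qed.

Lemma step e (j : nat -> nat) L Kx phiX aX A B a b :
  gauge e -> (forall u n, e u ^ j n = u ^ (2 * n)) ->
  (forall R, L0 (fun u => R u / (u ^ 2) ^ Kx) 0 -> L0 (fun u => R u / e u ^ L) 0) ->
  ex gsq phiX aX Kx -> phiX 0 = aX O -> ex e A a L -> ex e B b L -> 0 < a O -> 0 < b O ->
  ex e (fun u => B u * phiX (u * A u / B u))
     (fun k => sumR (S Kx) (fun n => aX n * shiftR (j n) (Xs n a b) k)) L.
Proof.
  intros Hg Hj Hrem Hphi H0 HA HB Ha Hb.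
  pose proof (ex_lim _ _ _ _ Hg HA) as LA. pose proof (ex_lim _ _ _ _ Hg HB) as LB.
  assert (HBnz := L0_neq _ _ LB ltac:(lra)).
  assert (Lq : L0 (fun u => A u / B u) (a O / b O)).
  { unfold Rdiv. apply L0_mult; auto. apply L0_inv; auto; lra. }
  assert (Hev : Rbar_locally' 0 (fun u => B u <> 0 /\ u <> 0)).
  { apply (filter_and _ _ HBnz (near1 (fun u => u <> 0) (fun u _ H => H))). }
  set (v := fun u => u * A u / B u).
  assert (Lvu : L0 (fun u => v u / u) (a O / b O)).
  { eapply L0_ext; [|exact Lq]. eapply filter_imp; [|exact Hev]. intros u [_ Hu]. unfold v, Rdiv.
    replace (u * A u * / B u * / u) with (A u * / B u * (u * / u)) by ring. rewrite Rinv_r; auto; ring. }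
  assert (Lv : L0 v 0).
  { replace 0 with (0 * (a O / b O)) by ring. eapply L0_ext'; [|apply L0_mult; [apply L0_id|exact Lq]].
    intros u; unfold v, Rdiv; ring. }
  pose proof (comp_lemma phiX aX Kx v _ Hphi H0 Lv Lvu) as Rc.
  apply Hrem in Rc.
  assert (Rc2 := L0_mult _ _ _ _ LB Rc). rewrite Rmult_0_r in Rc2.
  assert (Hsum : ex e (fun u => sumR (S Kx) (fun n => aX n * (e u ^ j n * (A u ^ (2 * n) * (B u / B u ^ (2 * n))))))
     (fun k => sumR (S Kx) (fun n => aX n * shiftR (j n) (Xs n a b) k)) L).
  { apply ex_sumR. intros n _. apply ex_scal. apply ex_mul_pow; auto.
    apply (ex_mult e L Hg _ _ _ _ (ex_Ppow e A a L n Hg Ha HA) (ex_Pneg e B b L n Hg Hb HB)). }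
  pose proof (ex_add_rem _ _ (fun u => B u * (phiX (v u) - polyR aX (v u ^ 2) Kx)) _ _ Hsum) as Fin.
  eapply ex_ext; [| |apply Fin].
  - eapply filter_imp; [|exact Hev]. intros u [HBu Hu]. cbv beta.
    assert (Hs : sumR (S Kx) (fun n => aX n * (e u ^ j n * (A u ^ (2 * n) * (B u / B u ^ (2 * n)))))
               = B u * polyR aX (v u ^ 2) Kx).
    { unfold polyR. rewrite <- sumR_scal. apply sumR_ext. intros n _. rewrite Hj, <- pow_mult.
      unfold v, Rdiv. rewrite !Rpow_mult_distr, pow_inv. field. apply pow_nonzero; auto. }
    rewrite Hs. unfold v. ring.
  - auto.
  - eapply L0_ext'; [|exact Rc2]. intros u. cbv beta. unfold Rdiv. ring.
Qed.

Lemma Hrem_gid L : forall R, L0 (fun u => R u / (u ^ 2) ^ L) 0 -> L0 (fun u => R u / gid u ^ L) 0.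
Proof.
  intros R H. assert (H2 := L0_mult _ _ _ _ H (L0_pow _ _ L L0_id)). rewrite Rmult_0_l in H2.
  eapply L0_ext; [|exact H2]. apply near1. intros u _ Hu. unfold gid.
  rewrite <- pow_mult. replace (2 * L)%nat with (L + L)%nat by lia. rewrite pow_add.
  field. apply pow_nonzero; auto.
Qed.

Lemma Hrem_gsq L : forall R, L0 (fun u => R u / (u ^ 2) ^ L) 0 -> L0 (fun u => R u / gsq u ^ L) 0.
Proof. intros R H. exact H. Qed.

Lemma trunc (A : nat -> R) (X : nat -> nat -> R) (j : nat -> nat) L k m :
  (m <= L)%nat -> (forall n, (n <= m)%nat -> (j n <= k)%nat) -> (forall n, (m < n)%nat -> (k < j n)%nat) ->
  sumR (S L) (fun n => A n * shiftR (j n) (X n) k) = sumR (S m) (fun n => A n * X n (k - j n)%nat).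
Proof.
  intros HmL H1 H2. replace (S L) with (S m + (L - m))%nat by lia. rewrite sumR_split.
  rewrite (sumR_zero (L - m)). rewrite Rplus_0_r. apply sumR_ext. intros n Hn. unfold shiftR.
  rewrite (proj2 (Nat.leb_le _ _)) by (apply H1; lia). auto.
  intros i _. unfold shiftR. rewrite (proj2 (Nat.leb_gt _ _)) by (apply H2; lia). ring.
Qed.

Lemma Xs0 a b : 0 < a O -> 0 < b O -> forall k, Xs 0 a b k = b k.
Proof.
  intros Ha Hb k. unfold Xs. replace (2 * INR 0) with 0 by (simpl; ring).
  replace (1 - 0) with 1 by ring. rewrite P_zero, P_one by auto. rewrite cp_cst1_l. auto.
Qed.

Lemma hseq_even a m : hseq a (2 * S m) = a (S m).
Proof.
  replace (2 * S m)%nat with (S (S (2 * m))) by lia. unfold hseq.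
  rewrite Nat.even_succ_succ, Nat.even_even.
  replace (Nat.div2 (S (S (2 * m)))) with (S m). auto. change (Nat.div2 (S (S (2 * m)))) with (S (Nat.div2 (2 * m))). rewrite Nat.div2_double. auto.
Qed.

Lemma Rpower_base1 x : Rpower 1 x = 1.
Proof. unfold Rpower. rewrite ln_1, Rmult_0_r. apply exp_0. Qed.

Lemma pos_mean X s t : is_mean X -> 0 < s -> 0 < t -> 0 < X s t.
Proof. intros H Hs Ht. destruct (H s t Hs Ht) as [A _]. eapply Rlt_le_trans; [|exact A].
  unfold Rmin; destruct Rle_dec; auto. Qed.

Lemma m_gid M aM : is_homogeneous M -> has_sym_asymp_exp M aM -> forall L, ex gid (phi M) (dil aM) L.
Proof.
  intros Hh Ha L. apply (ex_down_le gid _ _ (2 * L)); [apply gauge_id|lia|].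
  apply ex_even_of. apply hyp_ex; auto.
Qed.

Lemma gt_ex M aM : is_homogeneous M -> has_sym_asymp_exp M aM -> aM O = 1 ->
  forall L, ex gid (fun u => (phi M u - 1 + u) / u) (gseq aM) L.
Proof.
  intros Hh Ha H0 L.
  pose proof (ex_plus _ _ _ _ _ _ (ex_plus _ _ _ _ _ _ (m_gid M aM Hh Ha (S L)) (ex_const gid (-1) (S L)))
     (ex_self gid (S L) gauge_id)) as P1.
  apply exS_to in P1; [|apply gauge_id]. destruct P1 as [_ P1].
  eapply ex_ext; [| |exact P1].
  - apply filter_forall. intros u. cbv beta. unfold gid. simpl (cst _ _). simpl (cst1 _).
    unfold dil at 1. simpl (Nat.even 0). simpl (Nat.div2 0). rewrite H0. unfold Rdiv. ring.
  - intros [|k] _; unfold shift.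
    + simpl. unfold dil. simpl. ring.
    + unfold dil, gseq. simpl (cst _ _). simpl (cst1 _). rewrite Nat.odd_succ, Nat.even_succ_succ.
      destruct (Nat.even k); simpl; ring.
Qed.

Lemma ht_ex M aM : is_homogeneous M -> has_sym_asymp_exp M aM -> aM O = 1 ->
  forall L, ex gid (fun u => 1 - u + phi M u) (hseq aM) L.
Proof.
  intros Hh Ha H0 L.
  pose proof (ex_plus _ _ _ _ _ _ (ex_plus _ _ _ _ _ _ (ex_const gid 1 L) (ex_scal _ _ _ _ (-1) (ex_self gid L gauge_id)))
     (m_gid M aM Hh Ha L)) as P1.
  eapply ex_ext; [| |exact P1].
  - apply filter_forall. intros u. cbv beta. unfold gid. ring.
  - intros [|[|k]] _.
    + simpl. unfold dil. simpl. rewrite H0. ring.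
    + simpl. unfold dil. simpl. ring.
    + unfold dil, hseq. simpl (cst _ _). simpl (cst1 _). ring.
Qed.

Definition cN (aM aN : nat -> R) (L : nat) (k : nat) : R :=
  / 2 * sumR (S L) (fun n => aN n * shiftR (2 * n) (Xs n (gseq aM) (hseq aM)) k).

Lemma phiM_pos M u : is_mean M -> -1 < u < 1 -> 0 < phi M u.
Proof. intros H Hu. unfold phi. apply pos_mean; auto; lra. Qed.

Lemma N1_ex M N aM aN : is_mean M -> is_homogeneous M -> has_sym_asymp_exp M aM ->
  is_mean N -> is_homogeneous N -> has_sym_asymp_exp N aN ->
  forall L, ex gid (fun u => N (1 - u) (phi M u)) (cN aM aN L) L.
Proof.
  intros HmM HhM HaM HmN HhN HaN L.
  assert (H0M := a0_one M aM HmM HhM HaM). assert (H0N := a0_one N aN HmN HhN HaN).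
  pose proof (step gid (fun n => (2 * n)%nat) L L (phi N) aN (fun u => (phi M u - 1 + u) / u)
     (fun u => 1 - u + phi M u) (gseq aM) (hseq aM) gauge_id (fun u n => eq_refl) (Hrem_gid L)
     (hyp_ex N aN L HhN HaN) ltac:(rewrite phi0, H0N; auto) (gt_ex M aM HhM HaM H0M L) (ht_ex M aM HhM HaM H0M L)
     ltac:(simpl; lra) ltac:(simpl; lra)) as P1.
  apply (ex_scal _ _ _ _ (/ 2)) in P1.
  eapply ex_ext; [| |exact P1]; [|intros; reflexivity].
  apply near1. intros u Hu Hu0. cbv beta.
  assert (Hm := phiM_pos M u HmM Hu). set (m := phi M u) in *.
  set (c := (1 - u + m) / 2).
  set (w := u * ((m - 1 + u) / u) / (1 - u + m)).
  assert (Hc : 0 < c) by (unfold c; lra).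
  assert (E1 : 1 - u = c * (1 - w)) by (unfold c, w; field; split; auto; lra).
  assert (E2 : m = c * (1 + w)) by (unfold c, w; field; split; auto; lra).
  assert (Hw1 : 0 < 1 - w) by (apply (Rmult_lt_reg_l c); auto; rewrite <- E1; lra).
  assert (Hw2 : 0 < 1 + w) by (apply (Rmult_lt_reg_l c); auto; rewrite <- E2; lra).
  symmetry. transitivity (N (c * (1 - w)) (c * (1 + w))). { rewrite <- E1, <- E2. reflexivity. }
  rewrite HhN by auto. unfold phi. unfold c. field.
Qed.

Lemma cN_even aM aN L m : (2 * m <= L)%nat -> cN aM aN L (2 * m) = sseq aM aN m.
Proof.
  intros H. unfold cN, sseq, sum_ft. f_equal.
  rewrite (trunc aN (fun n => Xs n (gseq aM) (hseq aM)) (fun n => 2 * n)%nat L (2 * m) m); try lia.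
  replace (S m - 0)%nat with (S m) by lia. apply sumR_ext. intros. reflexivity.
  all: intros; lia.
Qed.

Lemma cN_odd aM aN L m : (S (2 * m) <= L)%nat -> cN aM aN L (S (2 * m)) = - dseq aM aN m.
Proof.
  intros H. unfold cN, dseq, sum_ft.
  rewrite (trunc aN (fun n => Xs n (gseq aM) (hseq aM)) (fun n => 2 * n)%nat L (S (2 * m)) m); try lia.
  replace (S m - 0)%nat with (S m) by lia. rewrite Ropp_mult_distr_l, Ropp_involutive. f_equal.
  apply sumR_ext. intros n Hn. simpl (0 + n)%nat. rewrite conv_Xs. f_equal. f_equal. lia.
  all: intros; lia.
Qed.

Lemma sseq0 aM aN : aN O = 1 -> sseq aM aN O = 1.
Proof.
  intros H. unfold sseq, sum_ft. change (sumR (S 0 - 0) ?f) with (0 + f O).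
  cbv beta. change (0 + 0)%nat with O. change (2 * 0 - 2 * 0)%nat with O.
  rewrite conv_Xs, Xs0 by (simpl; lra). rewrite H. simpl. field.
Qed.

Lemma dseq0 aM aN : aN O = 1 -> dseq aM aN O = / 2.
Proof.
  intros H. unfold dseq, sum_ft. change (sumR (S 0 - 0) ?f) with (0 + f O).
  cbv beta. change (0 + 0)%nat with O. change (2 * 0 + 1 - 2 * 0)%nat with 1%nat.
  rewrite conv_Xs, Xs0 by (simpl; lra). rewrite H. simpl. field.
Qed.

Lemma conv_0 n a b : conv n 0 a b = Rpower (a O) (2 * INR n) * Rpower (b O) (1 - 2 * INR n).
Proof. unfold conv, sum_ft. simpl. rewrite !P_0. ring. Qed.

Theorem theorem3p6 (M N K : R -> R -> R) (aM aN aK : nat -> R) :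
  is_mean M -> is_symmetric M -> is_homogeneous M ->
  is_mean N -> is_symmetric N -> is_homogeneous N ->
  is_mean K -> is_symmetric K -> is_homogeneous K ->
  has_sym_asymp_exp M aM -> has_sym_asymp_exp N aN -> has_sym_asymp_exp K aK ->
  is_stable K -> is_stable N -> is_stabilized K N M ->
  aM 0%nat = 1 /\
  (forall m : nat, (1 <= m)%nat ->
     aM m =
       sum_ft 1 m (fun n => aN n * conv n (2 * m - 2 * n) (gseq aM) (hseq aM))
     + 2 * sum_ft 1 m (fun n => aK n *
             conv n (m - n) (dseq aM aN) (sseq aM aN))) /\
  aM 1%nat = / 2 * (aK 1%nat + aN 1%nat).
Proof.
  intros HmM HsM HhM HmN HsN HhN HmK HsK HhK HaM HaN HaK _ _ Hstab.
  assert (H0M := a0_one M aM HmM HhM HaM). assert (H0N := a0_one N aN HmN HhN HaN).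
  assert (H0K := a0_one K aK HmK HhK HaK).
  pose proof (N1_ex M N aM aN HmM HhM HaM HmN HhN HaN) as N1ex.
  assert (N2ex : forall L, ex gid (fun u => N (phi M u) (1 + u)) (alt (cN aM aN L)) L).
  { intros L. eapply ex_ext; [|intros; reflexivity|apply ex_neg, N1ex].
    apply near1. intros u Hu _. cbv beta.
    assert (E : phi M (- u) = phi M u).
    { unfold phi. replace (1 - - u) with (1 + u) by ring. replace (1 + - u) with (1 - u) by ring.
      apply HsM; lra. }
    rewrite E. replace (1 - - u) with (1 + u) by ring. apply HsN. lra. apply phiM_pos; auto. }
  set (Sf := fun u => (N (1 - u) (phi M u) + N (phi M u) (1 + u)) / 2).
  set (Df := fun u => (N (phi M u) (1 + u) - N (1 - u) (phi M u)) / 2).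
  assert (Sex : forall K', ex gsq Sf (sseq aM aN) K').
  { intros K'. set (L := (2 * K')%nat).
    pose proof (ex_scal _ _ _ _ (/ 2) (ex_plus _ _ _ _ _ _ (N1ex L) (N2ex L))) as P1.
    assert (P2 : ex gid Sf (fun k => / 2 * (cN aM aN L k + alt (cN aM aN L) k)) L).
    { eapply ex_ext; [|intros; reflexivity|exact P1]. apply filter_forall. intros u. unfold Sf. cbv beta. unfold Rdiv. ring. }
    apply ex_even_to in P2.
    - eapply ex_ext; [apply filter_forall; reflexivity| |exact P2]. intros m Hm. cbv beta.
      unfold alt. rewrite pow_1_even, cN_even by (unfold L; lia). field.
    - intros m. unfold alt. rewrite pow_1_odd. ring. }
  assert (Dex : forall K', ex gsq (fun u => Df u / u) (dseq aM aN) K').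
  { intros K'. set (L := S (2 * K')).
    pose proof (ex_scal _ _ _ _ (/ 2) (ex_plus _ _ _ _ _ _ (N2ex L) (ex_scal _ _ _ _ (-1) (N1ex L)))) as P1.
    assert (P2 : ex gid Df (fun k => / 2 * (alt (cN aM aN L) k + -1 * cN aM aN L k)) L).
    { eapply ex_ext; [|intros; reflexivity|exact P1]. apply filter_forall. intros u. unfold Df. cbv beta. unfold Rdiv. ring. }
    apply exS_to in P2; [|apply gauge_id]. destruct P2 as [_ P2].
    apply ex_even_to in P2.
    - eapply ex_ext; [| |exact P2].
      + apply filter_forall. intros u. cbv beta. unfold alt, gid. simpl pow. unfold Rdiv. ring.
      + intros m Hm. cbv beta. unfold shift, alt. rewrite pow_1_odd, cN_odd by (unfold L; lia). field.
    - intros m. unfold shift, alt. replace (S (S (2 * m))) with (2 * S m)%nat by lia. rewrite pow_1_even. ring. }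
  assert (Hd0 : 0 < dseq aM aN O) by (rewrite dseq0 by auto; lra).
  assert (Hs0 : 0 < sseq aM aN O) by (rewrite sseq0 by auto; lra).
  assert (Main : forall m, aM m = sumR (S m) (fun n => aK n * Xs n (dseq aM aN) (sseq aM aN) (m - n)%nat)).
  { intros m.
    pose proof (step gsq (fun n => n) m m (phi K) aK (fun u => Df u / u) Sf (dseq aM aN) (sseq aM aN) gauge_sq
      (fun u n => eq_sym (pow_mult u 2 n)) (Hrem_gsq m) (hyp_ex K aK m HhK HaK) ltac:(rewrite phi0, H0K; auto)
      (Dex m) (Sex m) Hd0 Hs0) as P1.
    assert (P2 : ex gsq (phi M) (fun k => sumR (S m) (fun n => aK n * shiftR n (Xs n (dseq aM aN) (sseq aM aN)) k)) m).
    { eapply ex_ext; [|intros; reflexivity|exact P1]. apply near1. intros u Hu Hu0. cbv beta.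
      assert (Hm := phiM_pos M u HmM Hu).
      assert (Hn1 : 0 < N (1 - u) (phi M u)) by (apply pos_mean; auto; lra).
      assert (Hn2 : 0 < N (phi M u) (1 + u)) by (apply pos_mean; auto; lra).
      set (n1 := N (1 - u) (phi M u)) in *. set (n2 := N (phi M u) (1 + u)) in *.
      assert (ES : Sf u = (n1 + n2) / 2) by reflexivity. assert (ED : Df u = (n2 - n1) / 2) by reflexivity.
      rewrite ES, ED.
      set (S0 := (n1 + n2) / 2). set (w := u * ((n2 - n1) / 2 / u) / S0).
      assert (HS : 0 < S0) by (unfold S0; lra).
      assert (E1 : n1 = S0 * (1 - w)) by (unfold w, S0; field; split; auto; lra).
      assert (E2 : n2 = S0 * (1 + w)) by (unfold w, S0; field; split; auto; lra).
      assert (Hw1 : 0 < 1 - w) by (apply (Rmult_lt_reg_l S0); auto; rewrite <- E1; lra).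
      assert (Hw2 : 0 < 1 + w) by (apply (Rmult_lt_reg_l S0); auto; rewrite <- E2; lra).
      symmetry. unfold phi at 1. rewrite Hstab by lra. fold (phi M u). fold n1 n2.
      rewrite E1, E2. rewrite HhK by auto. unfold phi. fold w. auto. }
    pose proof (ex_unique gsq m gauge_sq _ _ _ (hyp_ex M aM m HhM HaM) P2 m (le_n m)) as U.
    rewrite U. apply (trunc aK (fun n => Xs n (dseq aM aN) (sseq aM aN)) (fun n => n) m m m); intros; lia. }
  assert (Formula : forall m : nat, (1 <= m)%nat ->
     aM m =
       sum_ft 1 m (fun n => aN n * conv n (2 * m - 2 * n) (gseq aM) (hseq aM))
     + 2 * sum_ft 1 m (fun n => aK n * conv n (m - n) (dseq aM aN) (sseq aM aN))).
  { intros m Hm1. destruct m as [|m']; [lia|]. set (m := S m').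
    pose proof (Main m) as E. rewrite sumR_first in E. rewrite H0K, Nat.sub_0_r, Xs0 in E by auto.
    assert (Es : sseq aM aN m = / 2 * (aM m + sum_ft 1 m (fun n => aN n * conv n (2 * m - 2 * n) (gseq aM) (hseq aM)))).
    { unfold sseq. unfold sum_ft at 1. replace (S m - 0)%nat with (S m) by lia. rewrite sumR_first.
      simpl (0 + 0)%nat. rewrite H0N, conv_Xs, Xs0 by (simpl; lra). rewrite Nat.sub_0_r. unfold m. rewrite hseq_even.
      f_equal. f_equal. ring. }
    rewrite Es in E.
    assert (Ek : sumR m (fun i => aK (S i) * Xs (S i) (dseq aM aN) (sseq aM aN) (m - S i)%nat)
                 = sum_ft 1 m (fun n => aK n * conv n (m - n) (dseq aM aN) (sseq aM aN))) by reflexivity.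
    rewrite Ek in E. lra. }
  split; [auto|]. split; [auto|].
  rewrite (Formula 1%nat (le_n 1)). unfold sum_ft. simpl sumR. simpl (2 * 1 - 2 * (1 + 0))%nat. simpl (1 - (1 + 0))%nat.
  rewrite !conv_0. rewrite dseq0, sseq0 by auto. simpl (gseq aM 0). simpl (hseq aM 0).
  rewrite !Rpower_base1.
  assert (R1 : Rpower 2 (1 - 2 * INR 1) = / 2).
  { replace (1 - 2 * INR 1) with (- (1)) by (simpl; ring). rewrite Rpower_Ropp, Rpower_1; lra. }
  assert (R2 : Rpower (/ 2) (2 * INR 1) = / 4).
  { replace (2 * INR 1) with (INR 2) by (simpl; ring). rewrite Rpower_pow by lra. simpl. field. }
  try rewrite R1. try rewrite R2.
  field.
Qed.
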